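(* Let $(Q,\mathbf z)$ be a model for a tropical Plücker vector $\pi_\bullet\in\mathrm{Dr}(k,n)$. Then for every $v\in V(Q)$ such that $M_v$ is nonempty, $M_v=M(\pi^{-\mathbf b_v}_\bullet)$, and in particular $M_v$ is a matroid.
   Context: $Q$ is a finite loopless directed graph with labeled vertices $\mathbf z=(z_1,\dots,z_n)\in V(Q)^n$; directed distance $\delta(v,w)$ is the minimal walk cost where an edge is traversed forwards at cost 1 and backwards at cost $k-1$ (assumed finite, with $\delta(v,w)=1,\delta(w,v)=k-1$ for each edge $v\to w$). $(Q,\mathbf z)$ is a model for $\pi_\bullet\in\mathbb R^{\binom{[n]}k}$ if $\pi_I=-\frac1k\min_{x\in V(Q)}\sum_{i\in I}\delta(x,z_i)$ for all $I$; $v$ is a distance minimizer for $I$ if it attains this minimum. $M_v=\{I\in\binom{[n]}k: v\text{ is a distance minimizer for }I\}$. $\mathbf b_v=\frac1k(\delta(v,z_1),\dots,\delta(v,z_n))$. $\mathrm{Dr}(k,n)$: vectors such that for all $S\in\binom{[n]}{k-2}$ and $a<b<c<d\notin S$, $\min(\pi_{Sab}+\pi_{Scd},\pi_{Sac}+\pi_{Sbd},\pi_{Sad}+\pi_{Sbc})$ is attained twice. $\pi^{\mathbf x}_I=\pi_I-\sum_{i\in I}x_i$ and $M(\pi^{\mathbf x}_\bullet)=\{I:\pi^{\mathbf x}_I=\min_J\pi^{\mathbf x}_J\}$. *)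

(* Defs.v *)
From mathcomp Require Import all_boot all_order all_algebra.
Set Implicit Arguments. Unset Strict Implicit. Unset Printing Implicit Defensive.
Import Order.TTheory GRing.Theory Num.Theory.
Local Open Scope ring_scope.

Section Defs.
Variable V : finType.

Inductive walk (e : rel V) (k : nat) : V -> V -> nat -> Prop :=
| walk_nil v : walk e k v v 0
| walk_fwd v u w c : e v u -> walk e k u w c -> walk e k v w (1 + c)
| walk_bwd v u w c : e u v -> walk e k u w c -> walk e k v w ((k - 1) + c).

Definition is_dirdist (e : rel V) (k : nat) (delta : V -> V -> nat) : Prop :=
  forall v w, walk e k v w (delta v w) /\
              (forall c, walk e k v w c -> (delta v w <= c)%N).

Variables (n : nat) (delta : V -> V -> nat) (z : 'I_n -> V).

Definition dsum (x : V) (I : {set 'I_n}) : nat := (\sum_(i in I) delta x (z i))%N.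

Definition dist_minimizer (x : V) (I : {set 'I_n}) : bool :=
  [forall y : V, (dsum x I <= dsum y I)%N].

Variables (R : realFieldType) (k : nat).

Definition is_model (pi : {set 'I_n} -> R) : Prop :=
  forall I : {set 'I_n}, #|I| = k ->
    exists x : V, dist_minimizer x I /\ pi I = - ((dsum x I)%:R / k%:R).

Definition Mv (v : V) : {set {set 'I_n}} :=
  [set I : {set 'I_n} | (#|I| == k) && dist_minimizer v I].

Definition bv (v : V) : 'I_n -> R := fun i => (delta v (z i))%:R / k%:R.

End Defs.

Section Trop.
Variables (R : realFieldType) (n k : nat).

Definition min_twice (p q r : R) : bool :=
  [|| (p == q) && (p <= r), (p == r) && (p <= q) | (q == r) && (q <= p)].

Definition Dressian (pi : {set 'I_n} -> R) : Prop :=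
  forall S : {set 'I_n}, (#|S| + 2)%N = k ->
  forall a b c d : 'I_n, (a < b)%N -> (b < c)%N -> (c < d)%N ->
    a \notin S -> b \notin S -> c \notin S -> d \notin S ->
    min_twice (pi (a |: (b |: S)) + pi (c |: (d |: S)))
              (pi (a |: (c |: S)) + pi (b |: (d |: S)))
              (pi (a |: (d |: S)) + pi (b |: (c |: S))).

Definition pi_shift (pi : {set 'I_n} -> R) (x : 'I_n -> R) (I : {set 'I_n}) : R :=
  pi I - \sum_(i in I) x i.

Definition Mmin (pi : {set 'I_n} -> R) : {set {set 'I_n}} :=
  [set I : {set 'I_n} | (#|I| == k) &&
     [forall J : {set 'I_n}, (#|J| == k) ==> (pi I <= pi J)]].

End Trop.

Definition is_matroid (n : nat) (B : {set {set 'I_n}}) : Prop :=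
  B != set0 /\
  forall B1 B2, B1 \in B -> B2 \in B -> forall x, x \in B1 :\: B2 ->
    exists2 y, y \in B2 :\: B1 & (y |: (B1 :\ x)) \in B.

(* Main.v *)
Require Import Defs.
From mathcomp Require Import all_boot all_order all_algebra.
From mathcomp Require Import ring lra.
Import Order.TTheory GRing.Theory Num.Theory.
Set Implicit Arguments. Unset Strict Implicit. Unset Printing Implicit Defensive.
Local Open Scope ring_scope.

Section VM.
Variables (R : realFieldType) (n k : nat) (f : {set 'I_n} -> R).

Definition ex (B : {set 'I_n}) u v := v |: (B :\ u).

Definition VMprop d := forall B B' : {set 'I_n}, #|B| = k -> #|B'| = k ->
  #|B :\: B'| = d -> forall u, u \in B :\: B' ->
  exists2 v, v \in B' :\: B & f (ex B u v) + f (ex B' v u) <= f B + f B'.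

Hypothesis loc : VMprop 2.

Lemma card_ex (B : {set 'I_n}) (u v : 'I_n) : u \in B -> v \notin B -> #|ex B u v| = #|B|.
Proof.
move=> uB vB; rewrite /ex cardsU1 (cardsD1 u B) uB inE negb_and vB orbT.
by [].
Qed.

Lemma cardD_sym (B B' : {set 'I_n}) : #|B| = #|B'| -> #|B :\: B'| = #|B' :\: B|.
Proof. by move=> h; rewrite !cardsD h setIC. Qed.

Lemma exists_min (T : finType) (A : {set T}) (F : T -> R) :
  A != set0 -> exists2 x, x \in A & forall y, y \in A -> F x <= F y.
Proof.
case/set0Pn=> x0 xA.
case: (arg_minP F xA) => x Hx Hmin; exists x => //.
Qed.

Ltac sx i x := let H := fresh "H" in
  case: (eqVneq i x) => [->|/negbTE H]; [|rewrite ?H].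

Lemma VM_all d : VMprop d.
Proof.
elim: d => [|d IH] B B' cB cB' cd u uD.
  by move: cd; move/cards0_eq => h; rewrite h inE in uD.
have [d0|dpos] := posnP d.
  subst d.
  have cd' : #|B' :\: B| = 1%N by rewrite -cardD_sym ?cB ?cB'.
  case/eqP/cards1P: cd' => v hv.
  case/eqP/cards1P: cd => u' hu.
  have uu' : u = u' by move: uD; rewrite hu inE => /eqP.
  subst u'.
  have vD : v \in B' :\: B by rewrite hv inE.
  exists v => //.
  have e1 : ex B u v = B'.
    apply/setP=> i; rewrite /ex !inE.
    move/setP: (hu) => /(_ i); move/setP: (hv) => /(_ i).
    rewrite !inE /=.
    by case: (i \in B); case: (i \in B'); case: (i == u); case: (i == v).
  have e2 : ex B' v u = B.
    apply/setP=> i; rewrite /ex !inE.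
    move/setP: (hu) => /(_ i); move/setP: (hv) => /(_ i).
    rewrite !inE /=.
    by case: (i \in B); case: (i \in B'); case: (i == u); case: (i == v).
  by rewrite e1 e2 addrC.

have cdu : #|(B :\: B') :\ u| = d by move: cd; rewrite (cardsD1 u (B :\: B')) uD => -[].
have : (B :\: B') :\ u != set0 by rewrite -card_gt0 cdu.
case/set0Pn=> w; rewrite !inE => /and3P [wu wB' wB].
have : B' :\: B != set0 by rewrite -card_gt0 -cardD_sym ?cB ?cB' // cd.
move=> /(exists_min (fun y => f (ex B' y w) + f (ex B u y))) [v' v'D v'min].
move: (v'D) uD; rewrite !inE => /andP [v'B v'B'] /andP [uB' uB].
set B'' := ex B' v' w.
have cB'' : #|B''| = k by rewrite card_ex.
have e1 : B :\: B'' = (B :\: B') :\ w.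
  apply/setP=> i; rewrite /B'' /ex !inE.
  sx i w; rewrite ?eqxx ?wB ?wB' //=.
  by sx i v'; rewrite ?eqxx ?(negbTE v'B) ?andbF.
have uD'' : u \in B :\: B''.
  by rewrite e1 !inE eq_sym wu uB uB'.
have cd'' : #|B :\: B''| = d by move: cd; rewrite e1 (cardsD1 w (B :\: B')) !inE wB wB' => -[].
have [v vD ineq1] := IH B B'' cB cB'' cd'' u uD''.
move: vD; rewrite /B'' /ex !inE => /andP [vB /orP [/eqP vw| /andP [vv' vB']]].
  by rewrite vw wB in vB.
have [uv|uv] := eqVneq u v; first by move: uB'; rewrite uv vB'.
have [wv|wv] := eqVneq w v; first by move: wB; rewrite wv (negbTE vB).
have [uv'|uv'] := eqVneq u v'; first by move: uB'; rewrite uv' v'B'.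
have [wv'|wv'] := eqVneq w v'; first by move: wB; rewrite wv' (negbTE v'B).
have Fs := (eqxx, negbTE uv, negbTE uv', negbTE wv, negbTE wv', negbTE vv', negbTE wu,
  negbTE uB', negbTE wB', negbTE vB, negbTE v'B, uB, wB, vB', v'B').
have Gs := (eq_sym v u, eq_sym v' u, eq_sym v w, eq_sym v' w, eq_sym v' v, eq_sym u w).
rewrite (negbTE uv) (negbTE uv') (negbTE wv) (negbTE wv') (negbTE vv') (negbTE wu) in Gs.
set X := ex B'' v u.
have cX : #|X| = k.
  rewrite card_ex // /B'' /ex !inE ?Fs ?Gs //=.
have eX : X :\: B' = [set w; u].
  apply/setP=> i; rewrite /X /B'' /ex !inE.
  sx i u; rewrite ?Fs ?Gs //=; sx i w; rewrite ?Fs ?Gs //=;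
  sx i v; rewrite ?Fs ?Gs //=; sx i v'; rewrite ?Fs ?Gs //=;
  by case: (i \in B); case: (i \in B').
have cXB' : #|X :\: B'| = 2%N by rewrite eX cards2 wu.
have uX : u \in X :\: B' by rewrite eX !inE eqxx orbT.
have [c cD ineq2] := loc cX cB' cXB' uX.
have eB'X : B' :\: X = [set v'; v].
  apply/setP=> i; rewrite /X /B'' /ex !inE.
  sx i u; rewrite ?Fs ?Gs //=; sx i w; rewrite ?Fs ?Gs //=;
  sx i v; rewrite ?Fs ?Gs //=; sx i v'; rewrite ?Fs ?Gs //=;
  by case: (i \in B); case: (i \in B').
move: cD; rewrite eB'X !inE => /orP [/eqP Hc|/eqP Hc]; subst c.
- have e2 : ex X u v' = ex B' v w.
    apply/setP=> i; rewrite /X /B'' /ex !inE.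
    sx i u; rewrite ?Fs ?Gs //=; sx i w; rewrite ?Fs ?Gs //=;
    sx i v; rewrite ?Fs ?Gs //=; sx i v'; rewrite ?Fs ?Gs //=;
    by case: (i \in B); case: (i \in B').
  rewrite e2 in ineq2.
  have vD : v \in B' :\: B by rewrite !inE vB vB'.
  have hm := v'min v vD.
  exists v'; first by rewrite !inE v'B v'B'.
  rewrite -/B'' in hm.
  lra.
- have e2 : ex X u v = B''.
    apply/setP=> i; rewrite /X /B'' /ex !inE.
    sx i u; rewrite ?Fs ?Gs //=; sx i w; rewrite ?Fs ?Gs //=;
    sx i v; rewrite ?Fs ?Gs //=; sx i v'; rewrite ?Fs ?Gs //=;
    by case: (i \in B); case: (i \in B').
  rewrite e2 in ineq2.
  exists v; first by rewrite !inE vB vB'.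
  lra.
Qed.

End VM.

Lemma mt_facts (R : realFieldType) (p q r : R) : min_twice p q r ->
  [/\ (q <= p \/ r <= p), (p <= q \/ r <= q) & (p <= r \/ q <= r)].
Proof.
case/or3P => /andP [/eqP e h].
- by subst; split; left; rewrite ?lexx.
- by subst; split; [right|left|left]; rewrite ?lexx.
- by subst; split; [left|right|right]; rewrite ?lexx.
Qed.

Section Loc.
Variables (R : realFieldType) (n k : nat) (h : {set 'I_n} -> R).
Hypothesis Dh : Dressian k h.
Variable S : {set 'I_n}.
Hypothesis cS : (#|S| + 2)%N = k.

Definition Fp (x y : 'I_n) := h (x |: (y |: S)).
Lemma FC x y : Fp x y = Fp y x.
Proof. by rewrite /Fp setUCA. Qed.

Definition P a b c d := Fp a c + Fp b d <= Fp a b + Fp c d \/ Fp a d + Fp b c <= Fp a b + Fp c d.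

Lemma Pab a b c d : P b a c d -> P a b c d.
Proof. by rewrite /P (FC b a) => -[h1|h1]; [right|left]; lra. Qed.
Lemma Pcd a b c d : P a b d c -> P a b c d.
Proof. by rewrite /P (FC d c) => -[h1|h1]; [right|left]; lra. Qed.
Lemma Ppair a b c d : P c d a b -> P a b c d.
Proof.
rewrite /P (FC c a) (FC d b) (FC c b) (FC d a).
by case=> h1; [left|right]; lra.
Qed.

Section Sorted.
Variables w x y z : 'I_n.
Hypotheses (wS : w \notin S) (xS : x \notin S) (yS : y \notin S) (zS : z \notin S).
Hypotheses (wx : (w < x)%N) (xy : (x < y)%N) (yz : (y < z)%N).
Let MT := mt_facts (Dh cS wx xy yz wS xS yS zS).
Lemma P1 : P w x y z.
Proof. by case: MT; rewrite /P /Fp. Qed.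
Lemma P2 : P w y x z.
Proof. by case: MT; rewrite /P -/(Fp _ _) (FC y x) /Fp. Qed.
Lemma P3 : P w z x y.
Proof. by case: MT; rewrite /P -/(Fp _ _) (FC z x) (FC z y) /Fp => _ _ [h1|h1]; [left|right]. Qed.
End Sorted.

Lemma P_all a b c d : a \notin S -> b \notin S -> c \notin S -> d \notin S ->
  a != b -> a != c -> a != d -> b != c -> b != d -> c != d -> P a b c d.
Proof.
have ne (i j : 'I_n) : i != j -> (i < j)%N \/ (j < i)%N.
  move=> ij; case: (ltngtP i j) => [h1|h1|e]; [by left|by right|].
  by move/eqP: ij; case; apply: val_inj.
have key a' b' c' d' : a' \notin S -> b' \notin S -> c' \notin S -> d' \notin S ->
    b' != c' -> b' != d' -> (a' < b')%N -> (c' < d')%N -> (a' < c')%N -> P a' b' c' d'.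
  move=> aS bS cS' dS bc bd ab cd ac.
  case: (ne _ _ bc) => bc'.
    exact: P1.
  case: (ne _ _ bd) => bd'.
    exact: P2.
  exact: P3.
move=> aS bS cS' dS ab ac ad bc bd cd.
wlog ab' : a b aS bS ab ac ad bc bd / (a < b)%N.
  move=> W; case: (ne _ _ ab) => h1; first exact: W.
  apply: Pab; apply: W => //; by rewrite eq_sym.
wlog cd' : c d cS' dS ac ad bc bd cd / (c < d)%N.
  move=> W; case: (ne _ _ cd) => h1; first exact: W.
  apply: Pcd; apply: W => //; by rewrite eq_sym.
case: (ne _ _ ac) => h1; first by apply: key.
apply: Ppair; apply: key => //; by rewrite eq_sym.
Qed.
End Loc.


Section VM2.
Variables (R : realFieldType) (n k : nat) (h : {set 'I_n} -> R).
Hypothesis Dh : Dressian k h.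

Lemma VM2 : VMprop k h 2.
Proof.
move=> B B' cB cB' c2 u uD.
set S := B :&: B'.
have cS : (#|S| + 2)%N = k by rewrite -cB -(cardsID B' B) c2.
have [b [ub eb]] : exists b, u != b /\ B :\: B' = [set u; b].
  case/cards2P: (introT eqP c2) => x [y [xy exy]].
  move: uD; rewrite exy !inE => /orP [/eqP ->|/eqP ->].
    by exists y.
  by exists x; rewrite eq_sym xy setUC.
have c2' : #|B' :\: B| = 2%N by rewrite -cardD_sym ?cB ?cB'.
case/cards2P: (introT eqP c2') => c [d [cd ecd]].
have eB : B = S :|: [set u; b] by rewrite -eb setID.
have eB' : B' = S :|: [set c; d] by rewrite -ecd /S setIC setID.
have mS i : (i \in S) = (i \in B) && (i \in B') by rewrite /S inE.
clearbody S.
have mB i : (i \in B) = [|| i \in S, i == u | i == b] by rewrite {1}eB !inE.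
have mB' i : (i \in B') = [|| i \in S, i == c | i == d] by rewrite {1}eB' !inE.
have mD i : (i \in B :\: B') = (i == u) || (i == b) by rewrite eb !inE.
have mD' i : (i \in B' :\: B) = (i == c) || (i == d) by rewrite ecd !inE.
have nS i : (i \in B :\: B') || (i \in B' :\: B) -> i \notin S.
  by rewrite !inE mS; case: (i \in B); case: (i \in B').
have uS : u \notin S by apply: nS; rewrite mD eqxx.
have bS : b \notin S by apply: nS; rewrite mD eqxx orbT.
have cS' : c \notin S by apply: nS; rewrite mD' eqxx orbT.
have dS : d \notin S by apply: nS; rewrite mD' eqxx !orbT.
have neq (x y : 'I_n) : x \in B :\: B' -> y \in B' :\: B -> x != y.
  by rewrite !inE => /andP [xB' _] /andP [_ yB']; apply: contraNneq xB' => ->.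
have uc : u != c by apply: neq; rewrite ?mD ?mD' eqxx.
have ud : u != d by apply: neq; rewrite ?mD ?mD' eqxx ?orbT.
have bc : b != c by apply: neq; rewrite ?mD ?mD' eqxx ?orbT.
have bd : b != d by apply: neq; rewrite ?mD ?mD' eqxx ?orbT.
have HP := P_all Dh cS uS bS cS' dS ub uc ud bc bd cd.
have Fs := (negbTE ub, negbTE uc, negbTE ud, negbTE bc, negbTE bd, negbTE cd,
  negbTE uS, negbTE bS, negbTE cS', negbTE dS).
have Gs := (eq_sym b u, eq_sym c u, eq_sym d u, eq_sym c b, eq_sym d b, eq_sym d c).
rewrite (negbTE ub) (negbTE uc) (negbTE ud) (negbTE bc) (negbTE bd) (negbTE cd) in Gs.
have E1 : B = u |: (b |: S).
  by rewrite eB; apply/setP=> i; rewrite !inE; case: (i \in S); case: (i == u); case: (i == b).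
have E2 : B' = c |: (d |: S).
  by rewrite eB'; apply/setP=> i; rewrite !inE; case: (i \in S); case: (i == c); case: (i == d).
have Ex (x y q : 'I_n) : x != y -> x != q -> x \notin S ->
    ex (x |: (y |: S)) x q = q |: (y |: S).
  move=> xy xq xS; apply/setP=> i; rewrite /ex !inE.
  case: (eqVneq i x) => [->|_]; last by [].
  by rewrite (negbTE xy) (negbTE xS) /= ?orbF.
have X1 : ex (u |: (b |: S)) u d = d |: (b |: S) by apply: Ex.
have X2 : ex (c |: (d |: S)) d u = u |: (c |: S).
  by rewrite setUCA; apply: Ex; rewrite // eq_sym.
have X3 : ex (u |: (b |: S)) u c = c |: (b |: S) by apply: Ex.
have X4 : ex (c |: (d |: S)) c u = u |: (d |: S).
  by apply: Ex; rewrite // eq_sym.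
have Y1 : h (d |: (b |: S)) = h (b |: (d |: S)) by rewrite setUCA.
have Y2 : h (c |: (b |: S)) = h (b |: (c |: S)) by rewrite setUCA.
rewrite /P /Fp in HP.
case: HP => HP.
- exists d; first by rewrite mD' eqxx orbT.
  rewrite E1 E2 X1 X2 Y1; lra.
- exists c; first by rewrite mD' eqxx.
  rewrite E1 E2 X3 X4 Y2; lra.
Qed.
End VM2.

Lemma sumU2 (R : realFieldType) n (x : 'I_n -> R) (S : {set 'I_n}) a b :
  a != b -> a \notin S -> b \notin S ->
  \sum_(i in a |: (b |: S)) x i = x a + x b + \sum_(i in S) x i.
Proof.
move=> ab aS bS; rewrite big_setU1 /=; last by rewrite !inE negb_or ab.
by rewrite big_setU1 //= addrA.
Qed.

Lemma Dshift (R : realFieldType) n k (pi : {set 'I_n} -> R) (x : 'I_n -> R) :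
  Dressian k pi -> Dressian k (pi_shift pi x).
Proof.
move=> D S cS a b c d ab bc cd aS bS cS' dS.
have := D S cS a b c d ab bc cd aS bS cS' dS.
have lt_neq (i j : 'I_n) : (i < j)%N -> i != j.
  by move=> h; apply/eqP => e; move: h; rewrite e ltnn.
have ac : (a < c)%N by apply: ltn_trans bc.
have bd : (b < d)%N by apply: ltn_trans cd.
have ad : (a < d)%N by apply: ltn_trans bd.
rewrite /pi_shift !sumU2 // ?lt_neq //.
set s := \sum_(i in S) x i.
set C := x a + x b + x c + x d + s + s.
set p := pi (a |: (b |: S)) + pi (c |: (d |: S)).
set q := pi (a |: (c |: S)) + pi (b |: (d |: S)).
set r := pi (a |: (d |: S)) + pi (b |: (c |: S)).
have -> : pi (a |: (b |: S)) - (x a + x b + s) + (pi (c |: (d |: S)) - (x c + x d + s)) = p - C.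
  by rewrite /p /C; ring.
have -> : pi (a |: (c |: S)) - (x a + x c + s) + (pi (b |: (d |: S)) - (x b + x d + s)) = q - C.
  by rewrite /q /C; ring.
have -> : pi (a |: (d |: S)) - (x a + x d + s) + (pi (b |: (c |: S)) - (x b + x c + s)) = r - C.
  by rewrite /r /C; ring.
have eqs (y1 y2 : R) : (y1 - C == y2 - C) = (y1 == y2).
  by apply/eqP/eqP => [e|->//]; have := congr1 (fun t => t + C) e; rewrite !subrK.
by rewrite /min_twice !eqs !lerD2r.
Qed.

Unset Implicit Arguments.
Theorem proposition3p9 (R : realFieldType) (V : finType) (e : rel V)
    (n k : nat) (z : 'I_n -> V) (delta : V -> V -> nat)
    (pi : {set 'I_n} -> R) :
  (0 < k)%N ->
  (forall v : V, ~~ e v v) ->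
  is_dirdist e k delta ->
  (forall v w : V, e v w -> delta v w = 1%N /\ delta w v = (k - 1)%N) ->
  Dressian k pi ->
  is_model delta z k pi ->
  forall v : V, Mv delta z k v != set0 ->
    Mv delta z k v = Mmin k (pi_shift pi (fun i => - bv delta z R k v i)) /\
    is_matroid (Mv delta z k v).
Proof.
move=> k0 _ _ _ D M v Mv0.
set g := pi_shift pi (fun i => - bv delta z R k v i).
have k0' : k%:R != 0 :> R by rewrite pnatr_eq0 -lt0n.
have gI : forall I : {set 'I_n}, #|I| = k -> exists x, dist_minimizer delta z x I /\
    g I = ((dsum delta z v I)%:R - (dsum delta z x I)%:R) / k%:R.
  move=> I cI; have [x [xm px]] := M I cI; exists x; split => //.
  rewrite /g /pi_shift px sumrN opprK /bv -mulr_suml /dsum natr_sum.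
  by rewrite natr_sum mulrBl addrC.
have gP : forall I : {set 'I_n}, #|I| = k -> 0 <= g I /\ (g I = 0 <-> dist_minimizer delta z v I).
  move=> I cI; have [x [/forallP xm ->]] := gI I cI.
  have hx := xm v.
  split.
    by rewrite divr_ge0 // subr_ge0 ler_nat.
  split.
    move/eqP; rewrite mulf_eq0 invr_eq0 (negbTE k0') orbF subr_eq0 eqr_nat => /eqP ev.
    by apply/forallP => y; rewrite ev; apply: xm.
  move/forallP => vm; have := vm x => hv.
  have -> : dsum delta z v I = dsum delta z x I by apply/eqP; rewrite eqn_leq hv hx.
  by rewrite subrr mul0r.
case/set0Pn: (Mv0) => I0; rewrite inE => /andP [/eqP cI0 vI0].
have gI0 : g I0 = 0 by apply/(proj2 (gP I0 cI0)).
have EM : Mv delta z k v = Mmin k g.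
  apply/setP => I; rewrite !inE; case: (#|I| =P k) => //= cI.
  apply/idP/forallP.
    move=> vI J; apply/implyP => /eqP cJ.
    have -> : g I = 0 by apply/(proj2 (gP I cI)).
    exact: (proj1 (gP J cJ)).
  move=> H; apply/(proj2 (gP I cI)).
  have := H I0; rewrite cI0 eqxx /= gI0 => h1.
  have := proj1 (gP I cI) => h2.
  by apply/eqP; rewrite eq_le h1 h2.
split => //.
rewrite EM; split; first by rewrite -EM.
move=> B1 B2; rewrite !inE => /andP [/eqP c1 /forallP m1] /andP [/eqP c2 /forallP m2] x xD.
have loc := VM2 (Dshift (fun i => - bv delta z R k v i) D).
have [y yD hy] := VM_all loc c1 c2 (erefl _) xD.
exists y => //.
move: xD yD; rewrite !inE => /andP [xB2 xB1] /andP [yB1 yB2].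
have ce1 : #|ex B1 x y| = k by rewrite card_ex.
have ce2 : #|ex B2 y x| = k by rewrite card_ex.
rewrite -/(ex B1 x y) ce1 eqxx /=; apply/forallP => J; apply/implyP => cJ.
have := m1 J; rewrite cJ /= => h1.
have := m2 (ex B2 y x); rewrite ce2 eqxx /= => h2.
rewrite -/g in hy h1 h2 *.
lra.
Qed.
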